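(* Let $m\ge 1$ and $n \ge 2m-2$ be integers. Then for every real $r$ with $|r|>1$, $$\int_{-1}^1 \frac{U_n(s)(1-s^2)^{m-\frac{1}{2}}}{s-r}\,ds = \pi(-1)^{m}(r^2-1)^{m-1}\left(r-\frac{|r|}{r}\sqrt{r^2-1}\right)^{n+1}.$$
   Context: $U_k(s)=\frac{\sin((k+1)\cos^{-1}s)}{\sin(\cos^{-1}s)}$ is the Tchebyshev polynomial of the second kind. Since $|r|>1$, the integrand has no singularity on $[-1,1]$ and the integral is an ordinary integral. *)

(* Defs.v *)
From Stdlib Require Import Reals Lra Lia.
From Coquelicot Require Import Coquelicot.
Open Scope R_scope.

(* On (-1,1) this agrees with
   sin((k+1) acos s) / sin(acos s), the formula in the paper (which is
   undefined only at s = +-1, irrelevant for the integral). *)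
Fixpoint chebU_aux (k : nat) (s : R) : R * R :=
  (* returns (U_k s, U_{k+1} s) *)
  match k with
  | O => (1, 2 * s)
  | S k' => let p := chebU_aux k' s in (snd p, 2 * s * snd p - fst p)
  end.

Definition chebU (k : nat) (s : R) : R := fst (chebU_aux k s).

(* Main.v *)
Require Import Defs.
From Stdlib Require Import Reals Lra Lia.
From Coquelicot Require Import Coquelicot.
Open Scope R_scope.

Lemma iR_plus (f g : R -> R) a b (A B : R) : is_RInt f a b A -> is_RInt g a b B ->
  is_RInt (fun t => f t + g t) a b (A + B).
Proof. intros H1 H2. exact (is_RInt_plus f g a b A B H1 H2). Qed.

Lemma iR_scal k (f : R -> R) a b (A : R) : is_RInt f a b A -> is_RInt (fun t => k * f t) a b (k * A).
Proof. intros H. exact (is_RInt_scal f a b k A H). Qed.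

Lemma iR_val (f : R -> R) a b (A B : R) : is_RInt f a b A -> A = B -> is_RInt f a b B.
Proof. intros H ->; exact H. Qed.

Lemma iR_uniq (f : R -> R) a b (A B : R) : is_RInt f a b A -> is_RInt f a b B -> A = B.
Proof. intros H1 H2. rewrite <- (is_RInt_unique _ _ _ _ H1). apply is_RInt_unique; auto. Qed.

Lemma cont_der (f : R -> R) x : ex_derive f x -> continuous f x.
Proof. intros H. exact (ex_derive_continuous f x H). Qed.

Lemma int_cos j : (1 <= j)%nat -> is_RInt (fun t => cos (INR j * t)) 0 PI 0.
Proof.
  intros Hj.
  assert (Hj' : INR j <> 0) by (apply not_0_INR; lia).
  eapply iR_val.
  - apply (is_RInt_derive (fun t => sin (INR j * t) / INR j)).
    + intros x _. auto_derive; auto. field; auto.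
    + intros x _. apply cont_der. auto_derive; auto.
  - simpl. rewrite Rmult_0_r, sin_0.
    rewrite (sin_eq_0_1 (INR j * PI)). unfold minus, plus, opp; simpl; field; auto.
    exists (Z.of_nat j). rewrite <- INR_IZR_INZ. reflexivity.
Qed.

Definition Lf (r : R) (n : nat) (t : R) := cos (INR n * t) / (cos t - r).
Definition L (r : R) (n : nat) : R := RInt (Lf r n) 0 PI.

Lemma cosr_ne r t : 1 < Rabs r -> cos t - r <> 0.
Proof.
  intros Hr. pose proof (COS_bound t). unfold Rabs in Hr; destruct (Rcase_abs r); lra.
Qed.

Lemma L_correct r n : 1 < Rabs r -> is_RInt (Lf r n) 0 PI (L r n).
Proof.
  intros Hr. unfold L. apply (RInt_correct (V:=R_CompleteNormedModule)). apply (ex_RInt_continuous (V:=R_CompleteNormedModule)). intros z _.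
  apply cont_der. unfold Lf. auto_derive. apply cosr_ne; auto.
Qed.

Lemma L_rec r n : 1 < Rabs r -> L r (S (S n)) = 2 * r * L r (S n) - L r n.
Proof.
  intros Hr.
  assert (H : is_RInt (fun t => Lf r (S (S n)) t + Lf r n t) 0 PI (2 * 0 + 2 * r * L r (S n))).
  { eapply is_RInt_ext; [| apply iR_plus; [apply iR_scal; apply (int_cos (S n)); lia | apply iR_scal; apply L_correct; auto]].
    intros x _. cbv beta. unfold Lf. pose proof (cosr_ne r x Hr).
    rewrite !S_INR.
    replace ((INR n + 1 + 1) * x) with ((INR n + 1) * x + x) by ring.
    replace (INR n * x) with ((INR n + 1) * x - x) by ring.
    rewrite cos_plus, cos_minus. match goal with |- ?a = ?b => change (@eq R a b) end. field. auto. }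
  pose proof (iR_uniq _ _ _ _ _ H (iR_plus _ _ _ _ _ _ (L_correct r (S (S n)) Hr) (L_correct r n Hr))).
  lra.
Qed.

Lemma L_1 r : 1 < Rabs r -> L r 1 = PI + r * L r 0.
Proof.
  intros Hr.
  assert (H : is_RInt (Lf r 1) 0 PI ((PI - 0) * 1 + r * L r 0)).
  { eapply is_RInt_ext; [| apply iR_plus; [apply (is_RInt_const 0 PI 1) | apply iR_scal; apply L_correct; auto]].
    intros x _. unfold Lf. pose proof (cosr_ne r x Hr). simpl. rewrite Rmult_1_l, Rmult_0_l, cos_0.
    field. auto. }
  pose proof (iR_uniq _ _ _ _ _ H (L_correct r 1 Hr)). lra.
Qed.

Lemma L_bound r n : 1 < Rabs r -> Rabs (L r n) <= PI * (1 / (Rabs r - 1)).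
Proof.
  intros Hr. unfold L. replace PI with (PI - 0) at 2 by ring.
  apply abs_RInt_le_const. pose proof PI_RGT_0; lra.
  eexists; apply L_correct; auto.
  intros t _. unfold Lf. unfold Rdiv. rewrite Rabs_mult, Rabs_inv.
  pose proof (COS_bound (INR n * t)). pose proof (COS_bound t).
  assert (Rabs (cos (INR n * t)) <= 1) by (apply Rabs_le; lra).
  assert (Rabs r - 1 <= Rabs (cos t - r)).
  { unfold Rabs in *. destruct (Rcase_abs r), (Rcase_abs (cos t - r)), (Rcase_abs (cos (INR n * t))); lra. }
  assert (0 < Rabs r - 1) by lra.
  rewrite Rmult_1_l.
  apply Rle_trans with (1 * / Rabs (cos t - r)).
  apply Rmult_le_compat_r; [ left; apply Rinv_0_lt_compat; lra | auto].
  rewrite Rmult_1_l. apply Rinv_le_contravar; lra.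
Qed.

Lemma L_closed r x : 1 < Rabs r -> x * x - 2 * r * x + 1 = 0 -> Rabs x < 1 -> x - r <> 0 ->
  forall n, L r n = x ^ n * (PI / (x - r)).
Proof.
  intros Hr hx hx1 hxr.
  assert (x0 : x <> 0) by (intro; subst; lra).
  set (D := fun n => L r (S n) - x * L r n).
  assert (HD : forall n, D (S n) * x = D n).
  { intro n. unfold D. rewrite L_rec by auto.
    assert (L r (S n) * (x * x - 2 * r * x + 1) = 0) by (rewrite hx; ring). nra. }
  assert (HDn : forall n, D n * x ^ n = D 0%nat).
  { induction n. simpl; ring. rewrite <- IHn, <- (HD n). change (x ^ S n) with (x * x ^ n). ring. }
  set (C := PI * (1 / (Rabs r - 1))).
  assert (HC : forall n, Rabs (D n) <= 2 * C).
  { intro n. unfold D. pose proof (L_bound r n Hr). pose proof (L_bound r (S n) Hr).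
    fold C in H, H0.
    unfold Rminus. eapply Rle_trans. apply Rabs_triang. rewrite Rabs_Ropp, Rabs_mult.
    assert (Rabs x * Rabs (L r n) <= 1 * C).
    { apply Rmult_le_compat; try apply Rabs_pos; lra. }
    lra. }
  assert (D0 : D 0%nat = 0).
  { destruct (Req_dec (D 0%nat) 0) as [|Hne]; auto. exfalso.
    assert (Cpos : 0 <= C) by (pose proof (HC 0%nat); pose proof (Rabs_pos (D 0%nat)); lra).
    assert (Hy : 0 < Rabs (D 0%nat) / (2 * C + 1)).
    { apply Rdiv_lt_0_compat. apply Rabs_pos_lt; auto. lra. }
    destruct (pow_lt_1_zero x hx1 _ Hy) as [N HN].
    specialize (HN N (le_n N)).
    rewrite <- (HDn N), Rabs_mult in Hy, HN.
    pose proof (HC N). pose proof (Rabs_pos (x ^ N)). pose proof (Rabs_pos (D N)).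
    set (a := Rabs (D N)) in *. set (b := Rabs (x ^ N)) in *.
    unfold Rdiv in *.
    assert (Hb : 0 < b) by (destruct (Req_dec b 0) as [e|]; [rewrite e in Hy; lra | lra]).
    assert (a * b * / (2 * C + 1) * (2 * C + 1) = a * b) by (field; lra).
    assert (b * (2 * C + 1) < a * b * / (2 * C + 1) * (2 * C + 1)) by (apply Rmult_lt_compat_r; lra).
    nra. }
  assert (HL : forall n, L r (S n) = x * L r n).
  { intro n. assert (D n = 0). { apply Rmult_eq_reg_r with (x ^ n). rewrite HDn; lra. apply pow_nonzero; auto. }
    unfold D in H. lra. }
  assert (L0 : L r 0 = PI / (x - r)).
  { pose proof (L_1 r Hr). rewrite HL in H. field_simplify_eq; auto. lra. }
  induction n. simpl. rewrite L0. ring. rewrite HL, IHn. simpl. ring.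
Qed.

Ltac req := match goal with |- ?a = ?b => change (@eq R a b) end.

(* pdeg d f : f is a polynomial of degree < d *)
Inductive pdeg : nat -> (R -> R) -> Prop :=
| pd_zero d : pdeg d (fun _ => 0)
| pd_const c : pdeg 1 (fun _ => c)
| pd_add d f g : pdeg d f -> pdeg d g -> pdeg d (fun s => f s + g s)
| pd_scal d c f : pdeg d f -> pdeg d (fun s => c * f s)
| pd_mulX d f : pdeg d f -> pdeg (S d) (fun s => s * f s)
| pd_mono d e f : (d <= e)%nat -> pdeg d f -> pdeg e f
| pd_ext d f g : (forall s, f s = g s) -> pdeg d f -> pdeg d g.

Lemma iR_zero a b : is_RInt (fun _ : R => 0) a b 0.
Proof.
  eapply iR_val. apply (is_RInt_const a b 0).
  change (scal (b - a) 0) with (mult (b - a) 0). unfold mult; simpl. ring.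
Qed.

Lemma orth d q : pdeg d q -> forall j, (d <= j)%nat ->
  is_RInt (fun t => cos (INR j * t) * q (cos t)) 0 PI 0.
Proof.
  induction 1; intros j Hj.
  - eapply is_RInt_ext; [| apply iR_zero].
    intros; cbv beta. match goal with |- ?a = ?b => change (@eq R a b) end. ring.
  - eapply is_RInt_ext; [| eapply iR_val; [apply (iR_scal c); apply (int_cos j); lia | req; ring]].
    intros; cbv beta; req; ring.
  - eapply is_RInt_ext; [| eapply iR_val; [apply iR_plus; [apply (IHpdeg1 j Hj) | apply (IHpdeg2 j Hj)] | req; ring]].
    intros; cbv beta; req; ring.
  - eapply is_RInt_ext; [| eapply iR_val; [apply (iR_scal c); apply (IHpdeg j Hj) | req; ring]].
    intros; cbv beta; req; ring.
  - destruct j as [|j]; [lia|].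
    eapply is_RInt_ext; [| eapply iR_val; [apply iR_plus; [apply (iR_scal (/2)); apply (IHpdeg (S (S j))); lia | apply (iR_scal (/2)); apply (IHpdeg j); lia] | req; ring]].
    intros t _; cbv beta. rewrite !S_INR.
    replace ((INR j + 1 + 1) * t) with ((INR j + 1) * t + t) by ring.
    replace (INR j * t) with ((INR j + 1) * t - t) by ring.
    rewrite cos_plus, cos_minus. req; field.
  - apply IHpdeg. lia.
  - eapply is_RInt_ext; [| apply (IHpdeg j Hj)]. intros; cbv beta. rewrite H. reflexivity.
Qed.

Fixpoint Qp (r : R) (k : nat) (c : R) : R :=
  match k with
  | O => 0
  | S k' => (1 - c ^ 2) * Qp r k' c - (1 - r ^ 2) ^ k' * (c + r)
  end.

Lemma Qp_eq r k c : (1 - c ^ 2) ^ k = (1 - r ^ 2) ^ k + (c - r) * Qp r k c.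
Proof.
  induction k. simpl; ring.
  change ((1 - c ^ 2) ^ S k) with ((1 - c ^ 2) * (1 - c ^ 2) ^ k).
  change ((1 - r ^ 2) ^ S k) with ((1 - r ^ 2) * (1 - r ^ 2) ^ k).
  cbn [Qp]. rewrite IHk. set (P := (1 - r ^ 2) ^ k). ring.
Qed.

Lemma Qp_deg r k : pdeg (2 * k) (Qp r k).
Proof.
  induction k; simpl. apply pd_zero.
  apply pd_add.
  - apply pd_ext with (fun c => Qp r k c + (-1) * (c * (c * Qp r k c))).
    intros; ring.
    apply pd_add. apply pd_mono with (2 * k)%nat; [lia | auto].
    apply pd_scal. replace (S (k + (S (k + 0))))%nat with (S (S (2 * k))) by lia.
    apply pd_mulX, pd_mulX. auto.
  - apply pd_ext with (fun c => (- (1 - r ^ 2) ^ k) * (c * 1 + r)). intros; simpl; ring.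
    apply pd_scal. apply pd_mono with 2%nat; [lia|].
    apply pd_add. apply pd_mulX, pd_const. apply pd_mono with 1%nat; [lia|]. apply pd_const.
Qed.

Lemma cheb_cos k t : fst (chebU_aux k (cos t)) * sin t = sin (INR (S k) * t) /\
  snd (chebU_aux k (cos t)) * sin t = sin (INR (S (S k)) * t).
Proof.
  induction k.
  - simpl. split. replace (1 * t) with t by ring. ring.
    replace ((1 + 1) * t) with (2 * t) by ring. rewrite sin_2a. ring.
  - destruct IHk as [H1 H2]. cbn [chebU_aux fst snd]. split; auto.
    replace (INR (S (S (S k))) * t) with (INR (S (S k)) * t + t) by (rewrite !S_INR; ring).
    replace (INR (S k) * t) with (INR (S (S k)) * t - t) in H1 by (rewrite !S_INR; ring).
    rewrite sin_minus in H1. rewrite sin_plus.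
    replace ((2 * cos t * snd (chebU_aux k (cos t)) - fst (chebU_aux k (cos t))) * sin t)
      with (2 * cos t * (snd (chebU_aux k (cos t)) * sin t) - fst (chebU_aux k (cos t)) * sin t) by ring.
    rewrite H1, H2. ring.
Qed.

Lemma cheb_der k s : ex_derive (fun s => fst (chebU_aux k s)) s /\
  ex_derive (fun s => snd (chebU_aux k s)) s.
Proof.
  revert s. induction k; intro s.
  - simpl. split; auto_derive; auto.
  - cbn [chebU_aux fst snd]. split. apply IHk.
    apply (ex_derive_minus (fun s => 2 * s * snd (chebU_aux k s)) (fun s => fst (chebU_aux k s))).
    apply (ex_derive_mult (fun s => 2 * s) (fun s => snd (chebU_aux k s))).
    auto_derive; auto. apply IHk. apply IHk.
Qed.

Lemma cont_mult (f g : R -> R) x : continuous f x -> continuous g x -> continuous (fun y => f y * g y) x.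
Proof. intros H1 H2. exact (continuous_mult (K:=R_AbsRing) f g x H1 H2). Qed.

Lemma f_cont n m r s : 1 < Rabs r -> -1 <= s <= 1 ->
  continuous (fun s => chebU n s * ((1 - s ^ 2) ^ m * sqrt (1 - s ^ 2)) / (s - r)) s.
Proof.
  intros Hr Hs.
  apply (cont_mult (fun s => chebU n s * ((1 - s ^ 2) ^ m * sqrt (1 - s ^ 2))) (fun s => / (s - r))).
  apply (cont_mult (fun s => chebU n s) (fun s => ((1 - s ^ 2) ^ m * sqrt (1 - s ^ 2)))).
  apply cont_der. apply (cheb_der n s).
  apply (cont_mult (fun s => (1 - s ^ 2) ^ m) (fun s => sqrt (1 - s ^ 2))).
  apply cont_der. auto_derive. auto.
  apply (continuous_comp (fun s => 1 - s ^ 2) sqrt). apply cont_der; auto_derive; auto.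
  apply continuity_pt_filterlim, continuity_pt_sqrt. nra.
  apply cont_der. auto_derive. unfold Rabs in Hr; destruct (Rcase_abs r); lra.
Qed.

Theorem mainTheorem10 (m n : nat) (r : R) :
  (1 <= m)%nat -> (2 * m - 2 <= n)%nat -> 1 < Rabs r ->
  is_RInt (fun s => chebU n s * ((1 - s ^ 2) ^ (m - 1) * sqrt (1 - s ^ 2)) / (s - r))
    (-1) 1
    (PI * (-1) ^ m * (r ^ 2 - 1) ^ (m - 1)
        * (r - Rabs r / r * sqrt (r ^ 2 - 1)) ^ (n + 1)).
Proof.
  intros Hm Hn Hr.
  destruct m as [|m']; [lia|]. replace (S m' - 1)%nat with m' by lia.
  assert (Hn' : (2 * m' <= n)%nat) by lia. clear Hm Hn.
  set (x := r - Rabs r / r * sqrt (r ^ 2 - 1)).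
  assert (HS : sqrt (r ^ 2 - 1) * sqrt (r ^ 2 - 1) = r ^ 2 - 1).
  { apply sqrt_sqrt. unfold Rabs in Hr; destruct (Rcase_abs r); nra. }
  assert (HSp : 0 < sqrt (r ^ 2 - 1)).
  { apply sqrt_lt_R0. unfold Rabs in Hr; destruct (Rcase_abs r); nra. }
  assert (Hx : (x * x - 2 * r * x + 1 = 0 /\ Rabs x < 1) /\ x - r <> 0).
  { unfold x. set (S := sqrt (r ^ 2 - 1)) in *.
    unfold Rabs in Hr |- *; destruct (Rcase_abs r) as [Hneg|Hpos].
    - replace (- r / r) with (-1) by (field; lra).
      split; [split|]; [nra | | nra].
      destruct (Rcase_abs (r - -1 * S)); nra.
    - replace (r / r) with 1 by (field; lra).
      split; [split|]; [nra | | nra].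
      destruct (Rcase_abs (r - 1 * S)); nra. }
  destruct Hx as [[hx hx1] hxr].
  fold x.
  set (f := fun s => chebU n s * ((1 - s ^ 2) ^ m' * sqrt (1 - s ^ 2)) / (s - r)).
  set (V := PI * (-1) ^ S m' * (r ^ 2 - 1) ^ m' * x ^ (n + 1)).
  set (P := (1 - r ^ 2) ^ m').
  assert (Step1 : is_RInt (fun t => sin t * f (cos t)) 0 PI V).
  { eapply is_RInt_ext; [| eapply iR_val; [
      apply iR_plus;
      [ apply (iR_scal (P / 2)); apply iR_plus;
        [ apply (L_correct r n Hr) | apply (iR_scal (-1)); apply (L_correct r (S (S n)) Hr) ]
      | apply iR_plus;
        [ apply (iR_scal (/2)); apply (orth _ _ (Qp_deg r m') n); lia
        | apply (iR_scal (-/2)); apply (orth _ _ (Qp_deg r m') (S (S n))); lia ] ] | ] ].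
    - intros t Ht. rewrite Rmin_left, Rmax_right in Ht by (pose proof PI_RGT_0; lra).
      cbv beta. unfold f, Lf. req.
      assert (Hsin : 0 <= sin t) by (apply sin_ge_0; lra).
      assert (Hsq : sqrt (1 - cos t ^ 2) = sin t).
      { rewrite <- (sqrt_pow2 (sin t)) by auto. f_equal. pose proof (sin2_cos2 t). unfold Rsqr in H. nra. }
      rewrite Hsq, (Qp_eq r m' (cos t)). fold P.
      pose proof (cosr_ne r t Hr) as Hc.
      destruct (cheb_cos n t) as [HU _].
      assert (Hprod : sin (INR (S n) * t) * sin t = (cos (INR n * t) - cos (INR (S (S n)) * t)) / 2).
      { replace (INR (S (S n)) * t) with (INR (S n) * t + t) by (rewrite !S_INR; ring).
        replace (INR n * t) with (INR (S n) * t - t) by (rewrite !S_INR; ring).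
        rewrite cos_plus, cos_minus. field. }
      unfold chebU. set (Qc := Qp r m' (cos t)).
      replace (sin t * (fst (chebU_aux n (cos t)) * ((P + (cos t - r) * Qc) * sin t) / (cos t - r)))
        with ((fst (chebU_aux n (cos t)) * sin t) * sin t * ((P + (cos t - r) * Qc) / (cos t - r)))
        by (field; auto).
      rewrite HU, Hprod. field. auto.
    - rewrite !(L_closed r x Hr hx hx1 hxr). unfold V, P.
      replace ((1 - r ^ 2) ^ m') with ((-1) ^ m' * (r ^ 2 - 1) ^ m')
        by (rewrite <- Rpow_mult_distr; f_equal; ring).
      rewrite pow_add. change ((-1) ^ S m') with (-1 * (-1) ^ m').
      change (x ^ S (S n)) with (x * (x * x ^ n)).
      set (M := (-1) ^ m' * (r ^ 2 - 1) ^ m'). set (X := x ^ n).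
      replace (PI * (-1 * (-1) ^ m') * (r ^ 2 - 1) ^ m' * (X * x ^ 1)) with (- PI * M * X * x)
        by (unfold M; simpl; ring).
      assert (E : (1 - x * x) / (2 * (x - r)) = - x).
      { field_simplify_eq; [nra | auto]. }
      replace (M / 2 * (X * (PI / (x - r)) + -1 * (x * (x * X) * (PI / (x - r)))) + (/ 2 * 0 + - / 2 * 0))
        with (M * X * PI * ((1 - x * x) / (2 * (x - r)))) by (field; auto).
      rewrite E. ring.
  }
  assert (Hcont : forall s, -1 <= s <= 1 -> continuous f s) by (intros; apply f_cont; auto).
  assert (Hc := is_RInt_comp f cos (fun y => - sin y) PI 0).
  rewrite cos_PI, cos_0 in Hc.
  assert (Hc' : is_RInt (fun y : R => scal (- sin y) (f (cos y))) PI 0 (RInt f (-1) 1)).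
  { apply Hc.
    - intros y _. apply Hcont. apply COS_bound.
    - intros y _. split. auto_derive; auto. ring. apply cont_der. auto_derive; auto. }
  clear Hc.
  apply is_RInt_swap in Hc'.
  assert (H2 : is_RInt (fun y : R => scal (- sin y) (f (cos y))) 0 PI (-1 * V)).
  { eapply is_RInt_ext; [| apply (iR_scal (-1)); exact Step1].
    intros; cbv beta. change (scal (- sin x0) (f (cos x0))) with (- sin x0 * f (cos x0)). req; ring. }
  pose proof (iR_uniq _ _ _ _ _ Hc' H2) as E.
  change (opp (RInt f (-1) 1)) with (- RInt f (-1) 1) in E.
  replace V with (RInt f (-1) 1) by lra.
  apply (RInt_correct (V:=R_CompleteNormedModule)).
  apply (ex_RInt_continuous (V:=R_CompleteNormedModule)).
  intros z Hz. rewrite Rmin_left, Rmax_right in Hz by lra. apply Hcont; auto.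
Qed.
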